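(* Let $S$ be a finite state set, $A$ a finite action-profile set and $q$ a transition kernel such that for every pure Markov strategy profile $\mathbf a=(a_s)_s\in A^{|S|}$ the matrix $(q(t\mid s,a_s))_{s,t}$ is irreducible; let $\pi(\mathbf a)=(\pi_s(\mathbf a))_{s\in S}$ be its unique invariant distribution. Let $\tilde\alpha:S\to\mathbb R^{|A|}$ satisfy $\sum_{a\in A}\tilde\alpha_s(a)=1$ for each $s$, and let $\tilde\beta\in\mathbb R^{|S|}$ satisfy $\sum_{s\in S}\sum_{a\in A}\tilde\beta_s\tilde\alpha_s(a)q(t\mid s,a)=\tilde\beta_t$ for every $t\in S$. Then there exists $k:A^{|S|}\to\mathbb R$ such that $$\tilde\beta_s\tilde\alpha_s(a)=\sum_{\mathbf a=(a_{s'})_{s'}\in A^{|S|}:\,a_s=a}k(\mathbf a)\,\pi_s(\mathbf a)\quad\text{for all } s\in S,\ a\in A.$$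
   Context: The entries $\tilde\alpha_s(a)$ may be negative. *)

(* Defs.v *)
From HB Require Import structures.
From mathcomp Require Import all_boot all_order all_algebra.
Set Implicit Arguments. Unset Strict Implicit. Unset Printing Implicit Defensive.
Import Order.TTheory GRing.Theory Num.Theory.
Local Open Scope ring_scope.

Definition transition_kernel (R : realFieldType) (S A : finType)
  (q : S -> A -> S -> R) : Prop :=
  (forall s a t, 0 <= q s a t) /\ (forall s a, \sum_(t : S) q s a t = 1).

Definition profile_matrix (R : realFieldType) (S A : finType)
  (q : S -> A -> S -> R) (p : {ffun S -> A}) : S -> S -> R :=
  fun s t => q s (p s) t.

(* Irreducible nonnegative matrix: the directed graph s -> t iff P s t > 0
   is strongly connected (equivalently, for all s t there is n with
   (P^n)_{s t} > 0). *)
Definition irreducible (R : realFieldType) (S : finType) (P : S -> S -> R) : Prop :=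
  forall s t : S, connect (fun x y : S => 0 < P x y) s t.

Definition invariant_distribution (R : realFieldType) (S : finType)
  (P : S -> S -> R) (mu : S -> R) : Prop :=
  [/\ forall s, 0 <= mu s,
      \sum_(s : S) mu s = 1
    & forall t, \sum_(s : S) mu s * P s t = mu t].

(* Main.v *)
Require Import Defs.
From HB Require Import structures.
From mathcomp Require Import all_boot all_order all_algebra.
From mathcomp Require Import ring lra.
Import Order.TTheory GRing.Theory Num.Theory.
Local Open Scope ring_scope.

Lemma zero_prop (R : realFieldType) (S : finType) (P : S -> S -> R) (w : S -> R)
  (hw : forall s, 0 <= w s) (hP : forall s t, 0 <= P s t)
  (hinv : forall t, \sum_s w s * P s t = w t) {x y} :
  0 < P x y -> w y = 0 -> w x = 0.
Proof.
move=> hxy hy.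
have h0 : \sum_s w s * P s y = 0 by rewrite hinv.
have := @psumr_eq0P R S xpredT (fun s => w s * P s y) (fun s _ => mulr_ge0 (hw s) (hP s y)) h0 x isT.
by move/eqP; rewrite mulf_eq0 (gt_eqF hxy) orbF => /eqP.
Qed.
Arguments zero_prop {R S P w} hw hP hinv {x y}.


Lemma connect_zero (R : realFieldType) (S : finType) (P : S -> S -> R) (w : S -> R)
  (hw : forall s, 0 <= w s) (hP : forall s t, 0 <= P s t)
  (hinv : forall t, \sum_s w s * P s t = w t) {x y} :
  connect (fun a b : S => 0 < P a b) x y -> w y = 0 -> w x = 0.
Proof.
move/connectP=> [p]; elim: p x => [|z p IH] x /=; first by move=> _ ->.
move=> /andP[hxz hp] hy hwy.
have := IH z hp hy hwy. apply: (zero_prop hw hP hinv); exact: hxz.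
Qed.
Arguments connect_zero {R S P w} hw hP hinv {x y}.


Lemma pos_inv (R : realFieldType) (S : finType) (P : S -> S -> R) (mu : S -> R)
  (hP : forall s t, 0 <= P s t) (hirr : irreducible P)
  (hmu : invariant_distribution P mu) t : 0 < mu t.
Proof.
case: hmu => h0 h1 hinv.
rewrite lt_def h0 andbT; apply/eqP => ht.
case: (pickP (fun s => mu s != 0)) => [s0 hs0 | hn].
  by move: hs0; rewrite (connect_zero h0 hP hinv (hirr s0 t) ht) eqxx.
move: h1; rewrite big1 => [/eqP|s _]; first by rewrite eq_sym oner_eq0.
by have := hn s => /negbFE/eqP.
Qed.
Arguments pos_inv {R S P mu}.


Lemma uniq_inv (R : realFieldType) (S : finType) (P : S -> S -> R) (mu z : S -> R)
  (hP : forall s t, 0 <= P s t) (hirr : irreducible P)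
  (hmu : invariant_distribution P mu)
  (hz : forall t, \sum_s z s * P s t = z t) :
  exists c, forall s, z s = c * mu s.
Proof.
case: (pickP (fun _ : S => true)) => [s0 _ | hn]; last first.
  by exists 0 => s; have := hn s.
have hpos := pos_inv hP hirr hmu.
case: hmu => _ _ hinv.
have [sm _ hmin] := @arg_minP _ _ _ s0 xpredT (fun s => z s / mu s) isT.
set c := z sm / mu sm.
exists c => s.
pose w s := z s - c * mu s.
have hw : forall s, 0 <= w s.
  move=> s'; rewrite /w subr_ge0 -ler_pdivlMr ?hpos //.
  exact: hmin.
have hwinv : forall t, \sum_s w s * P s t = w t.
  move=> t; rewrite /w.
  under eq_bigr do rewrite mulrBl -mulrA.
  by rewrite sumrB -mulr_sumr hz hinv.
have hwm : w sm = 0 by rewrite /w /c divfK ?subrr // gt_eqF ?hpos.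
have := connect_zero hw hP hwinv (hirr s sm) hwm.
by rewrite /w => /eqP; rewrite subr_eq0 => /eqP.
Qed.
Arguments uniq_inv {R S P mu z}.


Definition Dop (R : realFieldType) (S A : finType) (q : S -> A -> S -> R)
  (w : S -> A -> R) (t : S) :=
  \sum_s \sum_a w s a * q s a t - \sum_a w t a.
Arguments Dop {R S A}.

Lemma Dop_sub (R : realFieldType) (S A : finType) (q : S -> A -> S -> R) (w1 w2 : S -> A -> R) t :
  Dop q (fun s a => w1 s a - w2 s a) t = Dop q w1 t - Dop q w2 t.
Proof.
rewrite /Dop.
under eq_bigr do under eq_bigr do rewrite mulrBl.
under eq_bigr do rewrite sumrB.
rewrite !sumrB; ring.
Qed.

Lemma Dop_sum (R : realFieldType) (S A I : finType) (q : S -> A -> S -> R)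
  (G : I -> S -> A -> R) t :
  Dop q (fun s a => \sum_i G i s a) t = \sum_i Dop q (G i) t.
Proof.
rewrite /Dop sumrB; congr (_ - _); last by rewrite exchange_big.
under eq_bigr do under eq_bigr do rewrite mulr_suml.
under eq_bigr do rewrite exchange_big /=.
by rewrite exchange_big.
Qed.

Lemma Dop_scale (R : realFieldType) (S A : finType) (q : S -> A -> S -> R) c (w : S -> A -> R) t :
  Dop q (fun s a => c * w s a) t = c * Dop q w t.
Proof.
rewrite /Dop mulrBr mulr_sumr; congr (_ - _); last by rewrite mulr_sumr.
apply: eq_bigr => s _; rewrite mulr_sumr; apply: eq_bigr => a _; by rewrite mulrA.
Qed.

Lemma sum_delta (R : realFieldType) (T : finType) (p1 : T) (F : T -> R) :
  \sum_p (p == p1)%:R * F p = F p1.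
Proof.
rewrite (bigD1 p1) //= eqxx mul1r big1 ?addr0 // => p /negbTE ->.
by rewrite mul0r.
Qed.
Theorem mainTheorem4 (R : realFieldType) (S A : finType)
  (q : S -> A -> S -> R) (hq : transition_kernel q)
  (hirr : forall p : {ffun S -> A}, irreducible (profile_matrix q p))
  (pi : {ffun S -> A} -> S -> R)
  (hpi : forall p : {ffun S -> A}, invariant_distribution (profile_matrix q p) (pi p))
  (alpha : S -> A -> R) (halpha : forall s, \sum_(a : A) alpha s a = 1)
  (beta : S -> R)
  (hbeta : forall t : S,
      \sum_(s : S) \sum_(a : A) beta s * alpha s a * q s a t = beta t) :
  exists k : {ffun S -> A} -> R,
    forall (s : S) (a : A),
      beta s * alpha s a = \sum_(p : {ffun S -> A} | p s == a) k p * pi p s.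
Proof.
case: (pickP (fun _ : A => true)) => [a0 _ | hA]; last first.
  by exists (fun _ => 0) => s a; have := hA a.
have hq0 : forall p s t, 0 <= profile_matrix q p s t.
  by move=> p s t; rewrite /profile_matrix; case: hq => h _; exact: h.
have hpos : forall p s, 0 < pi p s.
  by move=> p s; exact: pos_inv (hq0 p) (hirr p) (hpi p) s.
pose p0 : {ffun S -> A} := [ffun => a0].
pose upd (i : S * A) : {ffun S -> A} :=
  [ffun s' => if s' == i.1 then i.2 else p0 s'].
pose x s a := beta s * alpha s a.
pose Y (p : {ffun S -> A}) s a := (p s == a)%:R * pi p s.
pose c (i : S * A) := (i.2 != p0 i.1)%:R * x i.1 i.2 / pi (upd i) i.1.
pose w s a := x s a - \sum_(i : S * A) c i * Y (upd i) s a.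
have hA0 : forall s a, a != p0 s -> w s a = 0.
  move=> s a ha; rewrite /w (bigD1 (s, a)) //= big1 ?addr0.
    rewrite /c /Y /= ha ffunE eqxx eqxx mul1r mul1r divfK ?subrr //.
    by rewrite gt_eqF ?hpos.
  case=> s' a' /= hne; rewrite /Y ffunE /=.
  case: (eqVneq s s') => [hs|hs].
    subst s'; case: (eqVneq a' a) => [ha'|ha'].
      by move: hne; rewrite ha' eqxx.
    by rewrite mul0r mulr0.
  by rewrite ?(negbTE hs) eq_sym (negbTE ha) mul0r mulr0.
have hDx : forall t, Dop q x t = 0.
  move=> t; rewrite /Dop /x /=.
  by rewrite hbeta -mulr_sumr halpha mulr1 subrr.
have hDY : forall p t, Dop q (Y p) t = 0.
  move=> p t; rewrite /Dop /Y /=.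
  have inner : forall s (F : A -> R), \sum_a (p s == a)%:R * pi p s * F a = pi p s * F (p s).
    move=> s F; rewrite (bigD1 (p s)) //= eqxx mul1r big1 ?addr0 // => a /negbTE.
    by rewrite eq_sym => ->; rewrite !mul0r.
  under eq_bigr => s _ do rewrite (inner s (fun a => q s a t)).
  have -> : \sum_a (p t == a)%:R * pi p t = pi p t.
    rewrite (bigD1 (p t)) //= eqxx mul1r big1 ?addr0 // => a /negbTE.
    by rewrite eq_sym => ->; rewrite !mul0r.
  by case: (hpi p) => _ _; rewrite /profile_matrix => ->; rewrite subrr.
have hDw : forall t, Dop q w t = 0.
  move=> t; rewrite /w Dop_sub Dop_sum hDx big1 ?subrr // => i _.
  by rewrite Dop_scale hDY mulr0.
pose z s := w s (p0 s).
have hz : forall t, \sum_s z s * profile_matrix q p0 s t = z t.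
  move=> t; have := hDw t; rewrite /Dop /z /profile_matrix.
  have inner : forall s (F : A -> R), \sum_a w s a * F a = w s (p0 s) * F (p0 s).
    move=> s F; rewrite (bigD1 (p0 s)) //= big1 ?addr0 // => a ha.
    by rewrite hA0 ?mul0r.
  under eq_bigr => s _ do rewrite (inner s (fun a => q s a t)).
  have -> : \sum_a w t a = w t (p0 t).
    by rewrite (bigD1 (p0 t)) //= big1 ?addr0 // => a ha; rewrite hA0.
  by move/eqP; rewrite subr_eq0 => /eqP.
have [c0 hc0] := uniq_inv (hq0 p0) (hirr p0) (hpi p0) hz.
have hw : forall s a, w s a = c0 * Y p0 s a.
  move=> s a; rewrite /Y; case: (eqVneq (p0 s) a) => [<-|hne].
    by rewrite ?eqxx mul1r -hc0.
  by rewrite ?(negbTE hne) mul0r mulr0 hA0 // eq_sym.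
exists (fun p => (p == p0)%:R * c0 + \sum_(i : S * A) (p == upd i)%:R * c i).
move=> s a.
rewrite big_mkcond /=.
transitivity (\sum_p ((p == p0)%:R * c0 + \sum_(i : S * A) (p == upd i)%:R * c i) * Y p s a); last first.
  by apply: eq_bigr => p _; rewrite /Y; case: (p s == a); rewrite ?mul1r ?mul0r ?mulr0.
under eq_bigr do rewrite mulrDl.
rewrite big_split /=.
under eq_bigr do rewrite -mulrA.
rewrite sum_delta.
under eq_bigr do rewrite mulr_suml.
rewrite exchange_big /=.
under eq_bigr => i _ do under eq_bigr => p _ do rewrite -mulrA (mulrC (c i)) -mulrA.
under eq_bigr => i _ do rewrite sum_delta.
rewrite -hw /w.
rewrite -[beta s * alpha s a](subrK (\sum_i c i * Y (upd i) s a) (x s a)).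
congr (_ + _); apply: eq_bigr => i _; rewrite /Y; ring.
Qed.
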